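(* (Perfect soundness.) Consider the card-based Makaro protocol described in the context. If the prover $P$ does not know a solution of the Makaro puzzle (so that the numbers encoded by the cell cards $P$ places violate at least one of the room, neighbor or arrow conditions), then the verifier $V$ always rejects.
   Context: Makaro puzzle: a rectangular grid of white and black cells. The white cells are partitioned into polyominoes called rooms; the size of a room is its number of cells. Some white cells already contain a number. Each black cell contains an arrow pointing to one of its (horizontally or vertically) adjacent white cells. A solution assigns a number to every empty white cell such that: (room condition) each room of size $p$ contains exactly the numbers $1,2,\dots,p$; (neighbor condition) two orthogonally adjacent white cells in different rooms contain different numbers; (arrow condition) for each black cell, the white cell its arrow points to contains the unique largest number among the (up to four) numbers in the white cells orthogonally adjacent to that black cell. Let $k$ be the size of the largest room. Cards: all cards have distinct front faces and identical backs. For each room $R$ of size $p$ there are cell cards $R_1,\dots,R_p$ (cards of different rooms are all distinct); there are helping cards $h_1,\dots,h_k$ and encoding cards $a_i,b_i,c_i,d_i$ for $i=1,\dots,2k-1$. A pile-scramble shuffle applied to a matrix of face-down cards permutes its columns by a uniformly random permutation unknown to all parties; a pile-shifting shuffle permutes the columns by a uniformly random cyclic shift unknown to all parties. Protocol. Setup: on each white cell of room $R$ containing (or, for empty cells, secretly assigned by $P$) the number $v$, $P$ places the face-down card $R_v$ (publicly for prefilled cells, secretly for the others). Room check, for each room $R$ of size $p$: put its cell cards in a fixed order in Row 1 of a $2\times p$ matrix and $h_1,\dots,h_p$ in Row 2; pile-scramble; reveal Row 1 and reject unless it is a permutation of $R_1,\dots,R_p$; turn these cards face down, pile-scramble again,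 reveal Row 2, rearrange the columns so Row 2 reads $h_1,\dots,h_p$, and return the Row 1 cards to their cells. Conversion (cell with card $R_x$ in room $R$ of size $p$, target length $m\ge p$, card set $X\in\{a,b,c,d\}$): put the cell cards of $R$ in a fixed order in Row 1 of a matrix, with $R_x$ in column $i$; $h_1,\dots,h_p$ in Row 2; $X_1$ in Row 3, column $i$; $P$ secretly forms a uniformly random permutation $S$ of $X_2,\dots,X_m$ and fills the remaining $p-1$ cells of Row 3 from left to right with the first $p-1$ cards of $S$. Pile-scramble the $3\times p$ matrix; reveal Row 1 and rearrange columns so Row 1 reads $R_1,\dots,R_p$; remove Row 3 as a sequence $T$ and append the remaining $m-p$ cards of $S$ to obtain a face-down sequence of length $m$ (the encoding sequence). Then turn Row 1 face down, pile-scramble, reveal Row 2, rearrange so it reads $h_1,\dots,h_p$, and return the cell cards to their cells. Neighbor check, for each pair of adjacent white cells in different rooms (room sizes $p,q$, $m=\max(p,q)$): convert the first cell with set $a$ and the second with set $b$, both with length $m$; place the two sequences as Rows 1 and 2 of a $2\times m$ matrix; pile-scramble; reveal Row 1; let $a_1$ be in column $i$; reveal the Row 2 card in column $i$ and reject if it is $b_1$. Arrow check, for each black cell: let the pointed-to cell and the other (up to three) adjacent white cells be considered, and let $m$ be the maximum room size among them; convert the pointed-to cell with set $a$ and the others with sets $b,c,d$, all with length $2m-1$; place them as rows of a matrix (Row 1 from set $a$); apply a pile-shifting shuffle; reveal Row 1, let $a_1$ be in column $i$; reveal the cards of the other rows in columns $i,i+1,\dots,i+m-1$ (indices modulo $2m-1$)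 and reject if any of them is $b_1$, $c_1$ or $d_1$. $V$ accepts if no check rejects. *)

(* Defs.v *)
From HB Require Import structures.
From mathcomp Require Import all_boot.

Set Implicit Arguments.
Unset Strict Implicit.
Unset Printing Implicit Defensive.

(* A Makaro instance on an nr x nc grid; cells are pairs (row, column).
   - white c : cell c is white (otherwise black);
   - room c  : label of the room of a white cell (rooms = classes of white
               cells with equal label);
   - given c : Some v if white cell c is prefilled with the number v;
   - arrow b : the cell the arrow of the black cell b points to.            *)
Record puzzle (nr nc : nat) := Puzzle {
  white : pred ('I_nr * 'I_nc);
  room  : 'I_nr * 'I_nc -> nat;
  given : 'I_nr * 'I_nc -> option nat;
  arrow : 'I_nr * 'I_nc -> 'I_nr * 'I_nc
}.

Definition ndist (m n : nat) : nat := (m - n) + (n - m).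

Definition adj (nr nc : nat) (x y : 'I_nr * 'I_nc) : bool :=
  ((x.1 == y.1) && (ndist x.2 y.2 == 1)) ||
  ((x.2 == y.2) && (ndist x.1 y.1 == 1)).

Inductive letter := LA | LB | LC | LD.
Definition letter_code (l : letter) : nat :=
  match l with LA => 0 | LB => 1 | LC => 2 | LD => 3 end.
Definition letter_dec (n : nat) : letter :=
  match n with 0 => LA | 1 => LB | 2 => LC | _ => LD end.
Lemma letter_codeK : cancel letter_code letter_dec. Proof. by case. Qed.
HB.instance Definition _ := Equality.copy letter (can_type letter_codeK).

(* CellC r v = cell card R_v of the room with label r;
   Help i    = helping card h_i;
   Enc l i   = encoding card l_i (l in {a,b,c,d}).                          *)
Inductive card := CellC (r v : nat) | Help (i : nat) | Enc (l : letter) (i : nat).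
Definition card_code (c : card) : nat * nat * nat :=
  match c with
  | CellC r v => (0, r, v)
  | Help i => (1, 0, i)
  | Enc l i => ((letter_code l).+2, 0, i)
  end.
Definition card_dec (t : nat * nat * nat) : card :=
  match t with
  | (0, r, v) => CellC r v
  | (1, _, i) => Help i
  | (n.+2, _, i) => Enc (letter_dec n) i
  end.
Lemma card_codeK : cancel card_code card_dec.
Proof. by case=> // l i; case: l. Qed.
HB.instance Definition _ := Equality.copy card (can_type card_codeK).

Definition dummy_card : card := Help 0.

(* A matrix of face-down cards is represented by the list of its columns,
   each column being the list of its cards from Row 1 downwards.
   [row k M] is Row k+1 of M (0-based index k). *)
Definition row (k : nat) (M : seq (seq card)) : seq card :=
  [seq nth dummy_card col k | col <- M].

Section Makaro.
Variables (nr nc : nat) (P : puzzle nr nc).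
Local Notation cell := ('I_nr * 'I_nc)%type.

Definition room_cells (r : nat) : seq cell :=
  [seq c <- enum {: cell} | white P c && (room P c == r)].
Definition room_size (r : nat) : nat := size (room_cells r).

Definition room_edge : rel cell :=
  [rel x y | [&& adj x y, white P x, white P y & room P x == room P y]].

Definition wf_puzzle : Prop :=
  [/\ (forall x y : cell, white P x -> white P y -> room P x = room P y ->
         connect room_edge x y),
      (forall b : cell, ~~ white P b -> adj b (arrow P b) && white P (arrow P b))
    & (forall (c : cell) v, given P c = Some v -> white P c)].

Definition room_condition (a : cell -> nat) : Prop :=
  forall c : cell, white P c ->
    perm_eq [seq a x | x <- room_cells (room P c)] (iota 1 (room_size (room P c))).

Definition neighbor_condition (a : cell -> nat) : Prop :=
  forall x y : cell, white P x -> white P y -> adj x y -> room P x != room P y ->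
    a x != a y.

Definition arrow_condition (a : cell -> nat) : Prop :=
  forall b : cell, ~~ white P b ->
    forall w : cell, white P w -> adj b w -> w != arrow P b ->
      a w < a (arrow P b).

(* the state of the table: the card lying (face down) on each cell *)
Definition state := cell -> card.

Definition setup (a : cell -> nat) : state := fun c => CellC (room P c) (a c).

Definition cell_cards (r p : nat) : seq card := [seq CellC r v | v <- iota 1 p].
Definition helpers (p : nat) : seq card := [seq Help i | i <- iota 1 p].

Definition return_cards (st : state) (rc : seq cell) (cs : seq card) : state :=
  fun x => if x \in rc then nth (st x) cs (index x rc) else st x.

(* Every possible outcome of a pile-scramble shuffle of the matrix M (a
   permutation of its columns) is a matrix M' with perm_eq M M'; every
   possible outcome of a pile-shifting shuffle of a matrix given by its rows
   is obtained by rotating all rows by the same amount.  Rearranging columns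
   so that a row reads a prescribed sequence is again a column permutation
   with that property.  [X_ok ... st'] means: there is an execution of the
   step X (for some outcomes of the shuffles and some choices of P) in which
   V does not reject, and which leaves the table in state st'. *)

Definition room_check (st : state) (r : nat) (st' : state) : Prop :=
  let rc := room_cells r in
  let p := size rc in
  let M := [seq [:: st xi.1; Help xi.2] | xi <- zip rc (iota 1 p)] in
  exists M1 M2 M3,
    [/\ perm_eq M M1,
        perm_eq (row 0 M1) (cell_cards r p),   (* reveal Row 1: no reject *)
        perm_eq M1 M2,
        perm_eq M2 M3 /\ row 1 M3 = helpers p  (* reveal Row 2, rearrange *)
      & st' = return_cards st rc (row 0 M3)].

Definition conversion (st : state) (x : cell) (l : letter) (m : nat)
    (E : seq card) (st' : state) : Prop :=
  let r := room P x in
  let rc := room_cells r in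
  let p := size rc in
  let i := index x rc in
  exists S : seq card,
    perm_eq S [seq Enc l j | j <- iota 2 m.-1] /\     (* P's secret S *)
    let S1 := take p.-1 S in
    let row3 := take i S1 ++ Enc l 1 :: drop i S1 in
    let M := [seq [:: st xi.1.1; Help xi.1.2; xi.2]
               | xi <- zip (zip rc (iota 1 p)) row3] in
    exists M1 M2 M3 M4,
      [/\ perm_eq M M1,
          perm_eq M1 M2 /\ row 0 M2 = cell_cards r p,    (* reveal, rearrange *)
          E = row 2 M2 ++ drop p.-1 S,
          perm_eq [seq take 2 col | col <- M2] M3
        & perm_eq M3 M4 /\ row 1 M4 = helpers p /\      (* reveal, rearrange *)
          st' = return_cards st rc (row 0 M4)].

Fixpoint conversions (st : state) (ws : seq (cell * letter)) (m : nat)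
    (Es : seq (seq card)) (st' : state) : Prop :=
  match ws with
  | [::] => Es = [::] /\ st' = st
  | (w, l) :: ws' => exists E st1 Es',
      [/\ conversion st w l m E st1, conversions st1 ws' m Es' st' & Es = E :: Es']
  end.

Definition neighbor_check (st : state) (xy : cell * cell) (st' : state) : Prop :=
  let: (x, y) := xy in
  let m := maxn (room_size (room P x)) (room_size (room P y)) in
  exists Ea Eb M1,
    [/\ conversions st [:: (x, LA); (y, LB)] m [:: Ea; Eb] st',
        perm_eq [seq [:: e.1; e.2] | e <- zip Ea Eb] M1
      & nth dummy_card (row 1 M1) (index (Enc LA 1) (row 0 M1)) != Enc LB 1].

Definition other_neighbors (b : cell) : seq cell :=
  [seq w <- enum {: cell} | [&& white P w, adj b w & w != arrow P b]].

Definition arrow_check (st : state) (b : cell) (st' : state) : Prop :=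
  let t := arrow P b in
  let os := other_neighbors b in
  let m := foldr maxn 0 [seq room_size (room P w) | w <- t :: os] in
  let L := (2 * m).-1 in
  exists Ea Es j,
    [/\ conversions st ((t, LA) :: zip os [:: LB; LC; LD]) L (Ea :: Es) st',
        j < L                                               (* pile-shifting *)
      & let i := index (Enc LA 1) (rot j Ea) in
        all (fun E => all (fun k => nth dummy_card (rot j E) ((i + k) %% L)
                                     \notin [:: Enc LB 1; Enc LC 1; Enc LD 1])
                          (iota 0 m)) Es].

Fixpoint run {A : Type} (step : state -> A -> state -> Prop) (st : state)
    (xs : seq A) (st' : state) : Prop :=
  match xs with
  | [::] => st' = st
  | x :: xs' => exists st1, step st x st1 /\ run step st1 xs' st'
  end.

Definition rooms : seq nat :=
  undup [seq room P c | c <- enum {: cell} & white P c].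

Definition neighbor_pairs : seq (cell * cell) :=
  [seq xy <- [seq (x, y) | x <- enum {: cell}, y <- enum {: cell}]
   | [&& index xy.1 (enum {: cell}) < index xy.2 (enum {: cell}),
         white P xy.1, white P xy.2, adj xy.1 xy.2 & room P xy.1 != room P xy.2]].

Definition black_cells : seq cell := [seq b <- enum {: cell} | ~~ white P b].

Definition verifier_accepts (a : cell -> nat) : Prop :=
  exists st1 st2 st3,
    [/\ run room_check (setup a) rooms st1,
        run neighbor_check st1 neighbor_pairs st2
      & run arrow_check st2 black_cells st3].

End Makaro.

(* Main.v *)
Require Import Defs.
From HB Require Import structures.
From mathcomp Require Import all_boot.
From mathcomp Require Import zify.
From Stdlib Require Import FunctionalExtensionality.

Lemma perm_eq_inj_map (T U : eqType) (f : T -> U) (s t : seq T) :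
  perm_eq s t -> uniq (map f s) -> map f t = map f s -> t = s.
Proof.
move=> pst us ets; have sz := perm_size pst.
case: s pst us ets sz => [|x0 s'] pst us ets sz.
  by case: t pst sz ets.
set s := x0 :: s' in pst us ets sz *.
apply: (eq_from_nth (x0:=x0)) => // i Hi.
have Hi' : i < size s by rewrite sz.
have Ht : nth x0 t i \in s by rewrite (perm_mem pst) mem_nth.
have Ej := nth_index x0 Ht.
have Hj : index (nth x0 t i) s < size s by rewrite index_mem.
have E2 : nth (f x0) (map f s) (index (nth x0 t i) s) = nth (f x0) (map f s) i.
  by rewrite (nth_map x0) // Ej -(nth_map x0 (f x0)) -?sz // ets.
move/eqP: E2; rewrite (nth_uniq (f x0)) ?size_map // => /eqP Eij.
by rewrite -{2}Eij Ej.
Qed.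

Lemma nth_rot' (T : Type) (d : T) (s : seq T) j q :
  j <= size s -> q < size s -> nth d (rot j s) q = nth d s ((q + j) %% size s).
Proof.
move=> hj hq; rewrite /rot nth_cat size_drop; case: ifP => h.
  by rewrite nth_drop modn_small; [congr nth; lia | lia].
rewrite nth_take; last lia.
have -> : q + j = (q + j - size s) + size s by lia.
rewrite modnDr modn_small; last lia.
congr nth; lia.
Qed.

Lemma nth_in (s : seq Defs.card) q c :
  nth dummy_card s q = c -> c != dummy_card -> c \in s.
Proof.
move=> <-; case: (ltnP q (size s)) => h; first by rewrite mem_nth.
by rewrite nth_default // eqxx.
Qed.

Set Implicit Arguments. Unset Strict Implicit.

Definition convspec nr nc (P : puzzle nr nc) (st : state nr nc) x l m E :=
  exists q, [/\ q < room_size P (room P x), st x = CellC (room P x) q.+1,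
     size E = m, nth dummy_card E q = Enc l 1 &
     forall j, j < m -> nth dummy_card E j = Enc l 1 -> j = q].

Lemma conv_lemma nr nc (P : puzzle nr nc) st x l m E st' :
  white P x -> room_size P (room P x) <= m ->
  conversion P st x l m E st' -> st' = st /\ convspec P st x l m E.
Proof.
move=> wx hm [S [pS [M1 [M2 [M3 [M4 [pM1 [pM2 r0M2] EE pM3 [pM4 [r1M4 Est']]]]]]]]].
rewrite /convspec /room_size in hm *.
have hx : x \in room_cells P (room P x) by rewrite mem_filter wx eqxx mem_enum.
move: (room P x) hx hm pS pM1 pM2 r0M2 EE pM3 pM4 r1M4 Est' => r.
move: (room_cells P r) => rc hx hm pS pM1 pM2 r0M2 EE pM3 pM4 r1M4 Est'.
have hi : index x rc < size rc by rewrite index_mem.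
have nxi : nth x rc (index x rc) = x by rewrite nth_index.
move: (index x rc) hi nxi pM1 => i hi nxi pM1.
have [p ep] : exists p, size rc = p by eexists.
rewrite ep in hi hm pM1 r0M2 EE r1M4.
have hp : 0 < p by lia.
have sizeS : size S = m.-1 by rewrite (perm_size pS) size_map size_iota.
have notS : Enc l 1 \notin S.
  rewrite (perm_mem pS); apply/mapP => -[j]; rewrite mem_iota => hj [] ej; lia.
have uS : uniq S by rewrite (perm_uniq pS) map_inj_uniq ?iota_uniq // => ? ? [].
have sS1 : size (take p.-1 S) = p.-1 by rewrite size_takel // sizeS; lia.
have nS1 : Enc l 1 \notin take p.-1 S by apply: contra notS; apply: mem_take.
have uS1 : uniq (take p.-1 S) by rewrite take_uniq.
move: (take p.-1 S) sS1 nS1 uS1 pM1 => S1 sS1 nS1 uS1 pM1.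
have sr3 : size (take i S1 ++ Enc l 1 :: drop i S1) = p.
  by rewrite size_cat /= size_take size_drop sS1; case: ifP; clear -hi; lia.
have pr3 : perm_eq (take i S1 ++ Enc l 1 :: drop i S1) (Enc l 1 :: S1).
  by rewrite -[Enc l 1 :: drop _ _]/([:: Enc l 1] ++ drop i S1) perm_catCA /= cat_take_drop.
have r3i : nth dummy_card (take i S1 ++ Enc l 1 :: drop i S1) i = Enc l 1.
  by rewrite nth_cat size_takel ?ltnn ?subnn // sS1; clear -hi; lia.
move: (take i S1 ++ Enc l 1 :: drop i S1) sr3 pr3 r3i pM1 => row3 sr3 pr3 r3i pM1.
have ur3 : uniq row3 by rewrite (perm_uniq pr3) /= nS1 uS1.
have r3u : forall k, nth dummy_card row3 k = Enc l 1 -> k = i.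
  move=> k hk; have hk' : k < p.
    by rewrite -sr3; case: (ltnP k (size row3)) => // h; rewrite nth_default in hk.
  by apply/eqP; rewrite -(nth_uniq dummy_card _ _ ur3) ?sr3 // hk r3i.
set f2 := (fun z : ('I_nr * 'I_nc * nat) => [:: st z.1; Help z.2]).
set f3 := (fun xi : ('I_nr * 'I_nc * nat * Defs.card) => [:: st xi.1.1; Help xi.1.2; xi.2]).
have sZ : size (zip rc (iota 1 p)) = p by rewrite size_zip size_iota ep minnn.
have nZ : forall k, k < p -> nth (x,0) (zip rc (iota 1 p)) k = (nth x rc k, k.+1).
  by move=> k hk; rewrite nth_zip ?size_iota // (nth_iota 0 1 hk) add1n.
have r1Z : row 1 (map f2 (zip rc (iota 1 p))) = helpers p.
  rewrite /row -map_comp /helpers -[in RHS](unzip2_zip (s:=rc) (t:=iota 1 p)) ?size_iota ?ep // -map_comp.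
  by apply: eq_map => -[? ?].
have r0Z : row 0 (map f2 (zip rc (iota 1 p))) = map st rc.
  rewrite /row -map_comp -[in RHS](unzip1_zip (s:=rc) (t:=iota 1 p)) ?size_iota ?ep // -map_comp.
  by apply: eq_map => -[? ?].
have tM : map (take 2) (map f3 (zip (zip rc (iota 1 p)) row3)) = map f2 (zip rc (iota 1 p)).
  rewrite -map_comp -[in RHS](unzip1_zip (s:=zip rc (iota 1 p)) (t:=row3)) ?sZ ?sr3 // -map_comp.
  by apply: eq_map => -[[? ?] ?].
move: (zip rc (iota 1 p)) sZ nZ r1Z r0Z tM pM1 => Z sZ nZ r1Z r0Z tM pM1.
have pM4' : perm_eq (map f2 Z) M4.
  rewrite -tM; apply: (perm_trans _ (perm_trans pM3 pM4)); apply: perm_map; exact: perm_trans pM1 pM2.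
have M4E : M4 = map f2 Z.
  apply: (@perm_eq_inj_map _ _ (fun col => nth dummy_card col 1)) => //.
    change (uniq (row 1 (map f2 Z))).
    by rewrite r1Z /helpers map_inj_uniq ?iota_uniq // => ? ? [].
  by change (row 1 M4 = row 1 (map f2 Z)); rewrite r1Z r1M4.
split.
  rewrite Est' M4E r0Z.
  apply: functional_extensionality => y; rewrite /return_cards; case: ifP => // hy.
  by rewrite (nth_map y) ?index_mem // nth_index.
rewrite ep.
set colx := f3 ((x, i.+1), Enc l 1).
have szr : size (zip Z row3) = p by rewrite size_zip sZ sr3 minnn.
have hzi : nth ((x,0),dummy_card) (zip Z row3) i = ((x, i.+1), Enc l 1).
  by rewrite nth_zip ?sZ ?sr3 // r3i nZ // nxi.
have cM : colx \in map f3 (zip Z row3) by apply: map_f; rewrite -hzi mem_nth // szr.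
have cM2 : colx \in M2 by rewrite -(perm_mem pM2) -(perm_mem pM1).
have sM2 : size M2 = p by rewrite -(perm_size pM2) -(perm_size pM1) size_map szr.
have hj0 : index colx M2 < p by rewrite -sM2 index_mem.
have nj0 : nth [::] M2 (index colx M2) = colx by rewrite nth_index.
move: (index colx M2) hj0 nj0 => j0 hj0 nj0.
have rowk : forall k j, j < p -> nth dummy_card (row k M2) j = nth dummy_card (nth [::] M2 j) k.
  by move=> k j hj; rewrite /row (nth_map [::]) // sM2.
have cc : forall j, j < p -> nth dummy_card (cell_cards r p) j = CellC r j.+1.
  by move=> j hj; rewrite /cell_cards (nth_map 0) ?size_iota // (nth_iota 0 1 hj).
have stx : st x = CellC r j0.+1 by rewrite -cc // -r0M2 rowk // nj0.
have sE : size E = m by rewrite EE size_cat size_map sM2 size_drop sizeS; clear -hp hm; lia.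
exists j0; split => //.
- by rewrite EE nth_cat size_map sM2 hj0 rowk // nj0.
- move=> j hj; rewrite EE nth_cat size_map sM2; case: ifP => hjp.
  + rewrite rowk // => ej.
    have : nth [::] M2 j \in map f3 (zip Z row3) by rewrite (perm_mem pM1) (perm_mem pM2) mem_nth // sM2.
    case/mapP => xi xiin exi.
    have hk : index xi (zip Z row3) < p by rewrite -szr index_mem.
    have exk : xi = nth ((x,0),dummy_card) (zip Z row3) (index xi (zip Z row3)) by rewrite nth_index.
    move: (index xi (zip Z row3)) hk exk => k hk exk.
    rewrite nth_zip ?sZ ?sr3 // in exk.
    have e2 : nth dummy_card row3 k = Enc l 1 by move: ej; rewrite exi exk.
    have ki := r3u _ e2.
    have : nth dummy_card (row 0 M2) j = st x.
      by rewrite rowk // exi exk ki /= nZ // nxi.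
    by rewrite r0M2 cc // stx => -[].
  + move=> ej; exfalso.
    have : Enc l 1 \in drop p.-1 S by apply: (nth_in _ _ _ ej).
    by move/mem_drop; rewrite (negbTE notS).
Qed.

Lemma convs_lemma nr nc (P : puzzle nr nc) st ws m Es st' :
  (forall w, w \in ws -> white P w.1 /\ room_size P (room P w.1) <= m) ->
  conversions P st ws m Es st' ->
  [/\ st' = st, size Es = size ws & forall k d, k < size ws ->
     convspec P st (nth d ws k).1 (nth d ws k).2 m (nth [::] Es k)].
Proof.
elim: ws st Es => [|[w l] ws IH] st Es H /=.
  by case=> -> ->.
case=> E [st1 [Es' [hc hcs ->]]].
have [hw hm] := H (w, l) (mem_head _ _).
have [e1 sp] := conv_lemma hw hm hc; subst st1.
have [-> sz hk] := IH st Es' (fun w' hw' => H w' (mem_behead (s := (w,l) :: ws) hw')) hcs.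
split => //=; first by rewrite sz.
by case=> [|k] d //= hk'; apply: hk.
Qed.

Lemma room_lemma nr nc (P : puzzle nr nc) a r st' :
  room_check P (setup P a) r st' ->
  st' = setup P a /\ perm_eq (map a (room_cells P r)) (iota 1 (room_size P r)).
Proof.
case=> M1 [M2 [M3 [pM1 r0M1 pM2 [pM3 r1M3] Est']]].
rewrite /room_size.
have hrc : forall y, y \in room_cells P r -> room P y = r.
  by move=> y; rewrite mem_filter => /andP [/andP [_ /eqP]].
move: (room_cells P r) hrc pM1 r0M1 r1M3 Est' => rc hrc pM1 r0M1 r1M3 Est'.
set f2 := (fun z : ('I_nr * 'I_nc * nat) => [:: setup P a z.1; Help z.2]).
have [p ep] : exists p, size rc = p by eexists.
rewrite ep in pM1 r0M1 r1M3 *.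
have r1Z : row 1 (map f2 (zip rc (iota 1 p))) = helpers p.
  rewrite /row -map_comp /helpers -[in RHS](unzip2_zip (s:=rc) (t:=iota 1 p)) ?size_iota ?ep // -map_comp.
  by apply: eq_map => -[? ?].
have r0Z : row 0 (map f2 (zip rc (iota 1 p))) = map (setup P a) rc.
  rewrite /row -map_comp -[in RHS](unzip1_zip (s:=rc) (t:=iota 1 p)) ?size_iota ?ep // -map_comp.
  by apply: eq_map => -[? ?].
move: (zip rc (iota 1 p)) r1Z r0Z pM1 => Z r1Z r0Z pM1.
have M3E : M3 = map f2 Z.
  apply: (@perm_eq_inj_map _ _ (fun col => nth dummy_card col 1)).
      exact: perm_trans pM1 (perm_trans pM2 pM3).
    change (uniq (row 1 (map f2 Z))).
    by rewrite r1Z /helpers map_inj_uniq ?iota_uniq // => ? ? [].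
  by change (row 1 M3 = row 1 (map f2 Z)); rewrite r1Z r1M3.
split.
  rewrite Est' M3E r0Z.
  apply: functional_extensionality => y; rewrite /return_cards; case: ifP => // hy.
  by rewrite (nth_map y) ?index_mem // nth_index.
have p0 : perm_eq (map (setup P a) rc) (cell_cards r p).
  by rewrite -r0Z; apply: perm_trans r0M1; apply: perm_map.
apply: (@perm_map_inj _ _ (CellC r)); first by move=> ? ? [].
rewrite -map_comp.
have -> : map (CellC r \o a) rc = map (setup P a) rc.
  by apply/eq_in_map => y hy /=; rewrite /setup hrc.
exact: p0.
Qed.

Lemma os_size nr nc (b t : 'I_nr * 'I_nc) (os : seq ('I_nr * 'I_nc)) :
  uniq os -> adj b t -> (forall w, w \in os -> adj b w && (w != t)) -> size os <= 3.
Proof.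
move=> uos abt hos.
pose g := fun w : 'I_nr * 'I_nc => (val w.1, val w.2).
have ginj : injective g by move=> [u1 u2] [v1 v2] [/val_inj -> /val_inj ->].
pose cand := [:: (val b.1, (val b.2).+1); (val b.1, (val b.2).-1);
                 ((val b.1).+1, val b.2); ((val b.1).-1, val b.2)].
have hc : forall w, adj b w -> g w \in cand.
  move=> [w1 w2]; rewrite /adj /ndist /= !inE !xpair_eqE -!val_eqE /=.
  move=> /orP [] /andP [/eqP e1 /eqP e2]; lia.
have sub : {subset map g os <= filter (predC1 (g t)) cand}.
  move=> z /mapP [w hw ->]; rewrite mem_filter /= (inj_eq ginj).
  by case/andP: (hos w hw) => aw ->; exact: hc.
have := uniq_leq_size _ sub; rewrite map_inj_uniq // size_map size_filter => /(_ uos).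
have := hc t abt; rewrite /cand; case: (g t) => t1 t2.
rewrite !inE /= !xpair_eqE => h1 h2; lia.
Qed.

Lemma run_inv nr nc (A : eqType) (step : state nr nc -> A -> state nr nc -> Prop)
    s (Q : A -> Prop) (xs : seq A) st' :
  (forall x st', x \in xs -> step s x st' -> st' = s /\ Q x) ->
  run step s xs st' -> st' = s /\ forall x, x \in xs -> Q x.
Proof.
elim: xs => [|x xs IH] H /=; first by move=> ->.
case=> st1 [h1 h2].
have [e1 q1] := H x st1 (mem_head _ _) h1; subst st1.
have [-> qs] := IH (fun y st'' hy => H y st'' (mem_behead (s := x :: xs) hy)) h2.
by split => // y; rewrite inE => /orP [/eqP -> | /qs].
Qed.

Lemma in_zip1 (S T : eqType) (s : seq S) (t : seq T) u v : (u, v) \in zip s t -> u \in s.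
Proof.
elim: s t => [|x s IH] [|y t] //=; rewrite inE => /orP [/eqP [-> _] | /IH h].
  by rewrite eqxx.
by rewrite h orbT.
Qed.

Lemma nb_lemma nr nc (P : puzzle nr nc) a x y st' :
  white P x -> white P y -> neighbor_check P (setup P a) (x, y) st' ->
  st' = setup P a /\ a x != a y.
Proof.
move=> wx wy [Ea [Eb [M1 [hc pM1 hn]]]].
have Hws : forall w, w \in [:: (x, LA); (y, LB)] -> white P w.1 /\
    room_size P (room P w.1) <= maxn (room_size P (room P x)) (room_size P (room P y)).
  move=> w; rewrite !inE => /orP [] /eqP -> /=; split => //; [exact: leq_maxl | exact: leq_maxr].
have [-> _ hk] := convs_lemma Hws hc.
split => //.
move: (hk 0 (x, LA) isT) (hk 1 (x, LA) isT) => /= [qa [ha sa sEa na ua]] [qb [hb sb sEb nb ub]].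
move: (maxn _ _) hn pM1 sEa sEb ua ub => m hn pM1 sEa sEb ua ub.
rewrite /setup in sa sb; case: sa => ->; case: sb => ->.
have hqa : qa < m by case: (ltnP qa (size Ea)) => h; [rewrite -sEa | rewrite nth_default in na].
have hqb : qb < m by case: (ltnP qb (size Eb)) => h; [rewrite -sEb | rewrite nth_default in nb].
set Z := [seq [:: e.1; e.2] | e <- zip Ea Eb] in pM1.
have szip : size (zip Ea Eb) = m by rewrite size_zip sEa sEb minnn.
have r0Z : row 0 Z = Ea.
  rewrite /row /Z -map_comp -[in RHS](unzip1_zip (s:=Ea) (t:=Eb)) ?sEa ?sEb // -map_comp.
have inA : Enc LA 1 \in row 0 M1.
  by rewrite -(perm_mem (perm_map (fun col => nth dummy_card col 0) pM1)) -/(row 0 Z) r0Z -na mem_nth // sEa.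
have hq : index (Enc LA 1) (row 0 M1) < size M1 by rewrite -(size_map (fun col => nth dummy_card col 0)) index_mem.
have nq := nth_index dummy_card inA.
move: (index _ _) hq nq hn => q hq nq hn.
rewrite /row (nth_map [::]) // in nq.
rewrite /row (nth_map [::]) // in hn.
have : nth [::] M1 q \in Z by rewrite (perm_mem pM1) mem_nth.
case/mapP => e he ee.
have hk' : index e (zip Ea Eb) < m by rewrite -szip index_mem.
have ek : e = nth (dummy_card, dummy_card) (zip Ea Eb) (index e (zip Ea Eb)) by rewrite nth_index.
move: (index _ _) hk' ek => k hk' ek.
rewrite nth_zip ?sEa ?sEb // in ek.
rewrite ee ek /= in nq hn.
have kq := ua _ hk' nq; subst k.
apply/negP => /eqP [eab]; subst qb.
by rewrite nb eqxx in hn.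
Qed.

Lemma le_foldr_max (s : seq nat) x : x \in s -> x <= foldr maxn 0 s.
Proof.
elim: s => //= y s IH; rewrite inE => /orP [/eqP -> | /IH h]; first exact: leq_maxl.
exact: leq_trans h (leq_maxr _ _).
Qed.

Lemma room_size_gt0 nr nc (P : puzzle nr nc) w : white P w -> 0 < room_size P (room P w).
Proof.
move=> ww; have : w \in room_cells P (room P w) by rewrite mem_filter ww eqxx mem_enum.
by rewrite /room_size; case: (room_cells _ _).
Qed.

Lemma ar_lemma nr nc (P : puzzle nr nc) (HP : wf_puzzle P) a b st' :
  ~~ white P b -> arrow_check P (setup P a) b st' ->
  st' = setup P a /\ forall w, white P w -> adj b w -> w != arrow P b -> a w < a (arrow P b).
Proof.
move=> bb [Ea [Es [j [hc hj hall]]]].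
have [adjt wt] : adj b (arrow P b) /\ white P (arrow P b).
  by case: HP => _ H2 _; apply/andP; exact: H2.
have hos : forall w, (w \in other_neighbors P b) = [&& white P w, adj b w & w != arrow P b].
  by move=> w; rewrite mem_filter mem_enum andbT.
have uos : uniq (other_neighbors P b) by rewrite filter_uniq // enum_uniq.
have sos : size (other_neighbors P b) <= 3.
  apply: (os_size uos adjt) => w; rewrite hos => /and3P [_ -> ->] //.
have hmax : forall w, w \in arrow P b :: other_neighbors P b ->
    room_size P (room P w) <= foldr maxn 0 [seq room_size P (room P w) | w <- arrow P b :: other_neighbors P b].
  by move=> w hw; apply: le_foldr_max; apply/mapP; exists w.
move: (other_neighbors P b) hos uos sos hc hj hall hmax => os hos uos sos hc hj hall hmax.
move: (foldr _ _ _) hc hj hall hmax => m hc hj hall hmax.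
have m0 : 0 < m by apply: leq_trans (room_size_gt0 wt) (hmax _ (mem_head _ _)).
have [L eL] : exists L, (2 * m).-1 = L by eexists.
rewrite eL in hc hj hall.
have hL : m <= L by move: m0; clear -eL; lia.
have Hws : forall w, w \in (arrow P b, LA) :: zip os [:: LB; LC; LD] ->
    white P w.1 /\ room_size P (room P w.1) <= L.
  move=> [u v]; rewrite in_cons => /orP [/eqP [-> _] | /in_zip1 hu] /=.
    by split => //; apply: leq_trans (hmax _ (mem_head _ _)) hL.
  move: (hu); rewrite hos => /and3P [wu _ _]; split => //.
  by apply: leq_trans (hmax u _) hL; rewrite in_cons hu orbT.
have [-> sz hk] := convs_lemma Hws hc.
split => // w ww aw nw.
have wos : w \in os by rewrite hos ww aw nw.
have szip : size (zip os [:: LB; LC; LD]) = size os by rewrite size_zip /=; move: sos; clear; lia.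
move: (hk 0 (arrow P b, LA) isT) => /= [qt [_ st_ sEa na ua]].
have hk' : index w os < size os by rewrite index_mem.
have e1 : nth (w, LB) ((arrow P b, LA) :: zip os [:: LB; LC; LD]) (index w os).+1
    = (w, nth LB [:: LB; LC; LD] (index w os)).
  change (nth (w, LB) (zip os [:: LB; LC; LD]) (index w os) = (w, nth LB [:: LB; LC; LD] (index w os))).
  by rewrite nth_zip_cond szip hk' /= nth_index.
have hk2 : (index w os).+1 < size ((arrow P b, LA) :: zip os [:: LB; LC; LD]).
  by change (index w os < size (zip os [:: LB; LC; LD])); rewrite szip.
have := hk _ (w, LB) hk2; rewrite e1 /=.
move: (index w os) hk' => k hk' [qw [hqw sw sE nw' _]].
rewrite /setup in st_ sw; case: st_ => ->; case: sw => ->.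
rewrite ltnS leqNgt; apply/negP => hlt.
have sEs : size Es = size os by move: sz => /= [->].
have EinEs : nth [::] Es k \in Es by rewrite mem_nth // sEs.
cbv zeta in hall.
have hqwm : qw < m by apply: leq_trans hqw (hmax _ _); rewrite in_cons wos orbT.
have := allP (allP hall _ EinEs) (qw - qt); rewrite mem_iota add0n.
move=> /(_ ltac:(move: hqwm; clear; lia)).
have inA : Enc LA 1 \in rot j Ea by rewrite mem_rot -na mem_nth // sEa; move: hlt hqwm hL; clear; lia.
have hi : index (Enc LA 1) (rot j Ea) < L by rewrite -sEa -(size_rot j) index_mem.
have ni := nth_index dummy_card inA.
move: (index _ _) hi ni => i hi ni.
have L0 : 0 < L by move: m0 hL; clear; lia.
have eij : (i + j) %% L = qt.
  apply: ua; first by rewrite ltn_pmod.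
  by rewrite -ni nth_rot' ?sEa ?(ltnW hj).
rewrite nth_rot' ?sE ?ltn_pmod ?(ltnW hj) //.
rewrite modnDml addnAC -modnDml eij.
have -> : qt + (qw - qt) = qw by move: hlt; clear; lia.
rewrite modn_small; last by apply: leq_trans hqwm hL.
rewrite nw'.
by move: hk' sos; clear; case: k => [|[|[|k]]] //=; lia.
Qed.

Lemma adj_sym nr nc (x y : 'I_nr * 'I_nc) : adj x y = adj y x.
Proof. by rewrite /adj /ndist (eq_sym x.1) (eq_sym x.2) (addnC (x.2 - _)) (addnC (x.1 - _)). Qed.

Lemma adj_irr nr nc (x : 'I_nr * 'I_nc) : adj x x = false.
Proof. by rewrite /adj /ndist !subnn /= !andbF. Qed.

Unset Implicit Arguments. Set Strict Implicit.

Theorem lemma2 (nr nc : nat) (P : puzzle nr nc) (HP : wf_puzzle P)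
    (a : 'I_nr * 'I_nc -> nat)
    (Hgiven : forall c v, given P c = Some v -> a c = v)
    (Hbad : ~ [/\ room_condition P a, neighbor_condition P a & arrow_condition P a]) :
  ~ verifier_accepts P a.
Proof.
move=> [st1 [st2 [st3 [hr hn ha]]]]; apply: Hbad.
have [e1 Qr] := run_inv (Q := fun r => perm_eq (map a (room_cells P r)) (iota 1 (room_size P r)))
  (fun r st' _ h => room_lemma h) hr.
subst st1.
have Hn : forall xy st', xy \in neighbor_pairs P -> neighbor_check P (setup P a) xy st' ->
    st' = setup P a /\ a xy.1 != a xy.2.
  move=> [x y] st'; rewrite /neighbor_pairs mem_filter => /andP [/and5P [_ wx wy _ _] _] h.
  exact: nb_lemma wx wy h.
have [e2 Qn] := run_inv Hn hn.
subst st2.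
have Ha : forall b st', b \in black_cells P -> arrow_check P (setup P a) b st' ->
    st' = setup P a /\ forall w, white P w -> adj b w -> w != arrow P b -> a w < a (arrow P b).
  move=> b st'; rewrite /black_cells mem_filter => /andP [bb _] h; by move: (ar_lemma HP bb h).
have [_ Qa] := run_inv Ha ha.
split.
- move=> c wc; apply: Qr; rewrite /rooms mem_undup; apply: map_f.
  by rewrite mem_filter wc mem_enum.
- move=> x y wx wy axy rxy.
  case: (ltngtP (index x (enum {: 'I_nr * 'I_nc})) (index y (enum {: 'I_nr * 'I_nc}))) => h.
  + apply: (Qn (x, y)); rewrite mem_filter /= h wx wy axy rxy /=.
    by apply: allpairs_f; rewrite mem_enum.
  + rewrite eq_sym; apply: (Qn (y, x)); rewrite mem_filter /= h wx wy adj_sym axy eq_sym rxy /=.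
    by apply: allpairs_f; rewrite mem_enum.
  + have : x = y.
      rewrite -(nth_index x (mem_enum _ x)) h nth_index //; exact: mem_enum.
    by move=> exy; rewrite exy adj_irr in axy.
- move=> b bb w ww aw nw; apply: (Qa b) => //.
  by rewrite mem_filter bb mem_enum.
Qed.
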